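(* Every commutative ring $A$ which is a principal ideal domain is a BL-ring.
   Context: For a commutative unitary ring $A$, its ideals $Id(A)$ form a residuated lattice $(Id(A),\cap,+,\otimes,\rightarrow,\{0\},A)$, ordered by inclusion, where $I+J$ is the ideal sum, $I\otimes J$ the ideal product, and $I\rightarrow J=(J:I)=\{x\in A: xI\subseteq J\}$. A BL-algebra is a residuated lattice satisfying prelinearity $(x\rightarrow y)\vee(y\rightarrow x)=1$ and divisibility $x\odot(x\rightarrow y)=x\wedge y$. A BL-ring is a commutative unitary ring whose lattice of ideals, with the structure above, is a BL-algebra. *)

(* Defs.v *)
From mathcomp Require Import all_boot all_algebra.
Set Implicit Arguments. Unset Strict Implicit. Unset Printing Implicit Defensive.
Import GRing.Theory.
Local Open Scope ring_scope.

Section IdealLattice.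
Variable R : comRingType.

Definition is_ideal (I : R -> Prop) : Prop :=
  [/\ I 0, (forall x y, I x -> I y -> I (x + y)) & (forall a x, I x -> I (a * x))].

Definition ideal_eq (I J : R -> Prop) : Prop := forall x, I x <-> J x.

Definition ideal_top : R -> Prop := fun _ => True.

Definition ideal_meet (I J : R -> Prop) : R -> Prop := fun x => I x /\ J x.

Definition ideal_sum (I J : R -> Prop) : R -> Prop :=
  fun z => exists x y, [/\ I x, J y & z = x + y].

Definition ideal_prod (I J : R -> Prop) : R -> Prop :=
  fun z => exists s : seq (R * R),
    (forall p, p \in s -> I p.1 /\ J p.2) /\ z = \sum_(p <- s) p.1 * p.2.

(* residuum I -> J = (J : I) *)
Definition ideal_res (I J : R -> Prop) : R -> Prop :=
  fun x => forall y, I y -> J (x * y).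

(* BL-ring: the residuated lattice of ideals satisfies prelinearity and divisibility *)
Definition BL_ring : Prop :=
  forall I J : R -> Prop, is_ideal I -> is_ideal J ->
    ideal_eq (ideal_sum (ideal_res I J) (ideal_res J I)) ideal_top /\
    ideal_eq (ideal_prod I (ideal_res I J)) (ideal_meet I J).

End IdealLattice.

Definition is_PID (R : idomainType) : Prop :=
  forall I : R -> Prop, is_ideal I ->
    exists a : R, forall x, I x <-> exists r : R, x = r * a.

(* Main.v *)
Require Import Defs.
From mathcomp Require Import all_boot all_algebra.
From mathcomp Require Import ring.
Import GRing.Theory.
Local Open Scope ring_scope.

Theorem theorem3p7 (R : idomainType) : is_PID R -> BL_ring R.
Proof.
move=> pid I J hI hJ.
have [a Ha] := pid I hI. have [b Hb] := pid J hJ.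
case: (hI) => I0 IA IM. case: (hJ) => J0 JA JM.
split.
- move=> z; split => // _.
  have hD : is_ideal (ideal_sum I J).
    split.
    + by exists 0, 0; split => //; rewrite addr0.
    + move=> z1 z2 [x1 [y1 [Ix1 Jy1 ->]]] [x2 [y2 [Ix2 Jy2 ->]]].
      exists (x1 + x2), (y1 + y2); split; [exact: IA | exact: JA | ring].
    + move=> c z1 [x1 [y1 [Ix1 Jy1 ->]]].
      exists (c * x1), (c * y1); split; [exact: IM | exact: JM | ring].
  have [d Hd] := pid _ hD.
  have [a' ea] : exists a', a = a' * d.
    apply/Hd; exists a, 0; split => //; last by rewrite addr0.
    by apply/Ha; exists 1; rewrite mul1r.
  have [b' eb] : exists b', b = b' * d.
    apply/Hd; exists 0, b; split => //; last by rewrite add0r.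
    by apply/Hb; exists 1; rewrite mul1r.
  have [x [y [Ix Jy ed]]] : ideal_sum I J d by apply/Hd; exists 1; rewrite mul1r.
  have [u eu] := (Ha x).1 Ix.
  have [v ev] := (Hb y).1 Jy.
  have resb : forall c, ideal_res I J (c * b').
    move=> c t /Ha [r ->].
    have -> : c * b' * (r * a) = (c * r * a') * b by rewrite ea eb; ring.
    by apply/Hb; eexists.
  have resa : forall c, ideal_res J I (c * a').
    move=> c t /Hb [r ->].
    have -> : c * a' * (r * b) = (c * r * b') * a by rewrite ea eb; ring.
    by apply/Ha; eexists.
  case: (eqVneq d 0) => [d0|dn0].
  + exists z, 0; split.
    * by move=> t /Ha [r ->]; rewrite ea d0 !mulr0.
    * by move=> t _; rewrite mul0r.
    * by rewrite addr0.
  + have h : d = (u * a' + v * b') * d.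
      by rewrite {1}ed eu ev ea eb; ring.
    have e1 : u * a' + v * b' = 1.
      by apply: (mulIf dn0) => /=; rewrite mul1r -h.
    exists (z * v * b'), (z * u * a'); split; [exact: resb | exact: resa |].
    transitivity (z * (u * a' + v * b')); [by rewrite e1 mulr1 | ring].
- move=> z; split.
  + case=> s [Hs ->]; elim: s Hs => [|p s IH] Hs.
      by rewrite big_nil; split.
    rewrite big_cons.
    have [Ip Rp] := Hs p (mem_head _ _).
    have [IH1 IH2] : I (\sum_(q <- s) q.1 * q.2) /\ J (\sum_(q <- s) q.1 * q.2).
      by apply: IH => q hq; apply: Hs; rewrite inE hq orbT.
    split; [apply: IA | apply: JA] => //; rewrite mulrC.
      exact: IM.
    exact: Rp.
  + case=> Iz Jz. have [r er] := (Ha z).1 Iz.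
    exists [:: (a, r)]; split.
      move=> p; rewrite inE => /eqP -> /=; split.
        by apply/Ha; exists 1; rewrite mul1r.
      move=> t /Ha [c ->].
      have -> : r * (c * a) = c * z by rewrite er; ring.
      exact: JM.
    by rewrite big_cons big_nil /= addr0 er mulrC.
Qed.
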